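(* Let $X$ be a compact metric space, $T:X\to X$ continuous, $\Phi=\{\phi_n\}$ a supadditive potential on $X$, $k$ a positive integer, and $\mu$ an ergodic $T$-invariant Borel probability measure. Then there is a constant $C$ such that for every $\eta>0$ there exists $\epsilon_0>0$ such that for all $0<\epsilon<\epsilon_0$, $n\ge1$ and $\delta\in(0,1)$, \[ P_\mu(T,\Phi,n,\epsilon,\delta)\ge e^{-n\eta-C}\,P_\mu\big(T,\tfrac{\phi_k}{k},n,\epsilon,\delta\big), \] and consequently $P_\mu(T,\Phi)\ge P_\mu\big(T,\tfrac{\phi_k}{k}\big)$.
   Context: $B_n(x,\epsilon)=\{y:d(T^ix,T^iy)<\epsilon,\ 0\le i\le n-1\}$. Supadditive potential: continuous $\phi_n$ with $\phi_{n+m}(x)\ge\phi_n(x)+\phi_m(T^nx)$. $F\subseteq X$ is $(n,\epsilon,\delta)$-spanning if $\mu(\bigcup_{x\in F}B_n(x,\epsilon))\ge1-\delta$. For $\Phi$: $P_\mu(T,\Phi,n,\epsilon,\delta)=\inf\{\sum_{x\in F}e^{\phi_n(x)}:F\ (n,\epsilon,\delta)\text{-spanning}\}$ and $P_\mu(T,\Phi)=\lim_{\delta\to0}\lim_{\epsilon\to0}\limsup_{n\to\infty}\frac1n\log P_\mu(T,\Phi,n,\epsilon,\delta)$. For a continuous function $\psi$ with $g_n=\sum_{i=0}^{n-1}\psi\circ T^i$: $P_\mu(T,\psi,n,\epsilon,\delta)=\inf\{\sum_{x\in F}\exp(\sup_{y\in B_n(x,\epsilon)}g_n(y)):F\ (n,\epsilon,\delta)\text{-spanning}\}$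 and $P_\mu(T,\psi)=\lim_{\delta\to0}\liminf_{\epsilon\to0}\limsup_{n\to\infty}\frac1n\log P_\mu(T,\psi,n,\epsilon,\delta)$. *)

(* Defs.v *)
From HB Require Import structures.
From mathcomp Require Import all_boot all_order all_algebra finmap.
From mathcomp Require Import all_classical all_reals all_analysis.
Set Implicit Arguments. Unset Strict Implicit. Unset Printing Implicit Defensive.
Import Order.TTheory GRing.Theory Num.Theory.
Import numFieldNormedType.Exports.
Local Open Scope classical_set_scope.
Local Open Scope ring_scope.

(* Metric spaces with a distinguished point (needed to form the Borel
   measurable type; harmless since X carries a probability measure). *)
#[short(type="pointedMetricType")]
HB.structure Definition PointedMetric (K : numDomainType) :=
  { M of Metric K M & isPointed M }.

Section Defs.
Context {R : realType} {X : pointedMetricType R}.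

Definition borel_space := g_sigma_algebraType (@open X).

Definition bowen_ball (T : X -> X) (n : nat) (x : X) (eps : R) : set X :=
  [set y | forall i : nat, (i < n)%N -> mdist (iter i T x) (iter i T y) < eps].

Definition supadditive_potential (T : X -> X) (phi : nat -> X -> R) : Prop :=
  (forall n, continuous (phi n)) /\
  (forall n m x, (0 < n)%N -> (0 < m)%N ->
     phi n x + phi m (iter n T x) <= phi (n + m)%N x).

Definition T_invariant (T : X -> X) (mu : probability borel_space R) : Prop :=
  forall A : set borel_space, measurable A -> mu (T @^-1` A) = mu A.

Definition ergodic (T : X -> X) (mu : probability borel_space R) : Prop :=
  forall A : set borel_space, measurable A -> T @^-1` A = A ->
    mu A = 0%E \/ mu A = 1%E.

Definition spanning (T : X -> X) (mu : probability borel_space R)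
    (n : nat) (eps delta : R) (F : {fset X}) : Prop :=
  (mu (\bigcup_(x in [set` F]) bowen_ball T n x eps) >= (1 - delta)%:E)%E.

Definition Pn_pot (T : X -> X) (mu : probability borel_space R)
    (phi : nat -> X -> R) (n : nat) (eps delta : R) : \bar R :=
  ereal_inf [set (\sum_(x <- F) expR (phi n x))%:E | F in spanning T mu n eps delta].

Definition birkhoff (T : X -> X) (psi : X -> R) (n : nat) (y : X) : R :=
  \sum_(i < n) psi (iter i T y).

Definition Pn_fun (T : X -> X) (mu : probability borel_space R)
    (psi : X -> R) (n : nat) (eps delta : R) : \bar R :=
  ereal_inf [set (\sum_(x <- F)
      expR (sup [set birkhoff T psi n y | y in bowen_ball T n x eps]))%:E
    | F in spanning T mu n eps delta].

Definition rate (n : nat) (v : \bar R) : \bar R := ((n%:R)^-1)%:E * lne v.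

Definition liminf_right0 (f : R -> \bar R) : \bar R :=
  ereal_sup [set ereal_inf [set f e | e in [set e | 0 < e < r]] | r in [set r | 0 < r]].

Definition pressure_pot (T : X -> X) (mu : probability borel_space R)
    (phi : nat -> X -> R) : \bar R :=
  lim ((fun delta => lim ((fun eps =>
          limn_esup (fun n => rate n (Pn_pot T mu phi n eps delta))) @ 0^'+)) @ 0^'+).

Definition pressure_fun (T : X -> X) (mu : probability borel_space R)
    (psi : X -> R) : \bar R :=
  lim ((fun delta => liminf_right0 (fun eps =>
          limn_esup (fun n => rate n (Pn_fun T mu psi n eps delta)))) @ 0^'+).

End Defs.

(* Main.v *)
Require Import Defs.
From HB Require Import structures.
From mathcomp Require Import all_boot all_order all_algebra finmap.
From mathcomp Require Import all_classical all_reals all_analysis.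
From mathcomp Require Import zify ring lra.
Set Implicit Arguments. Unset Strict Implicit. Unset Printing Implicit Defensive.
Import Order.TTheory GRing.Theory Num.Theory.
Import numFieldNormedType.Exports.
Local Open Scope classical_set_scope.
Local Open Scope ring_scope.
Section Comb.
Context {R : realType} {X : Type} (T : X -> X) (phi : nat -> X -> R) (k : nat) (M : R).
Hypothesis Hsup : forall n m x, (0 < n)%N -> (0 < m)%N ->
  phi n x + phi m (iter n T x) <= phi (n + m)%N x.
Hypothesis Hb : forall j x, (j <= k)%N -> `|phi j x| <= M.
Hypothesis k0 : (0 < k)%N.

Hypothesis M0 : 0 <= M.

Lemma lowB j x : (j <= k)%N -> - M <= phi j x.
Proof. by move=> jk; have := Hb x jk; rewrite ler_norml => /andP[]. Qed.
Lemma upB j x : (j <= k)%N -> phi j x <= M.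
Proof. by move=> jk; have := Hb x jk; rewrite ler_norml => /andP[]. Qed.

Lemma claimA m x : (0 < m)%N ->
  \sum_(0 <= l < m) phi k (iter (l * k) T x) <= phi (m * k)%N x.
Proof.
elim: m => // m IH _.
case: m IH => [|m] IH; first by rewrite big_nat1 mul1n mul0n.
rewrite big_nat_recr //=.
have H := Hsup x (_ : (0 < m.+1 * k)%N) k0.
rewrite (_ : (m.+2 * k)%N = (m.+1 * k + k)%N); last by rewrite mulSn addnC.
apply: le_trans (H _); first by rewrite lerD2r IH.
by rewrite muln_gt0.
Qed.


Lemma L1 a b x : (a <= k)%N -> phi b (iter a T x) - 2 * M <= phi (a + b)%N x.
Proof.
move=> ak; case: a ak => [|a] ak.
  by rewrite add0n /=; have := M0; lra.
case: b => [|b].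
  rewrite addn0; have := upB (iter a.+1 T x) (leq0n k); have := lowB x ak; have := M0; lra.
have := Hsup x (ltn0Sn a) (ltn0Sn b); have := lowB x ak; have := M0; lra.
Qed.

Lemma L2 b r x : (r <= k)%N -> phi b x - 2 * M <= phi (b + r)%N x.
Proof.
move=> rk; case: r rk => [|r] rk.
  by rewrite addn0; have := M0; lra.
case: b => [|b].
  rewrite add0n; have := upB x (leq0n k).
  have := lowB x rk; have := M0; lra.
have := Hsup x (ltn0Sn b) (ltn0Sn r); have := lowB (iter b.+1 T x) rk; have := M0; lra.
Qed.

Lemma Pp p m r x : (p < k)%N -> (r < k)%N ->
  \sum_(0 <= l < m) phi k (iter (l * k) T (iter p T x)) - 5 * M
    <= phi (p + m * k + r)%N x.
Proof.
move=> pk rk.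
have h1 := L1 (m * k + r) x (ltnW pk); rewrite addnA in h1.
have h2 := L2 (m * k) (iter p T x) (ltnW rk).
case: m h1 h2 => [|m] h1 h2.
  rewrite big_geq // mul0n; have := lowB (iter p T x) (leq0n k); have := M0; lra.
have := claimA (iter p T x) (ltn0Sn m); have := M0; lra.
Qed.


Lemma Qq p n x : (p < k)%N ->
  \sum_(0 <= l < n %/ k - 1) phi k (iter (l * k) T (iter p T x)) - 6 * M
    <= phi n x.
Proof.
move=> pk; case: (leqP p n) => pn; last first.
  rewrite divn_small; last exact: ltn_trans pk.
  rewrite big_geq //; have := lowB x (ltnW (ltn_trans pn pk)); have := M0; lra.
set m := ((n - p) %/ k)%N.
have en : n = (p + m * k + (n - p) %% k)%N.
  by rewrite -addnA -divn_eq subnKC.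
have h := Pp m x pk (ltn_pmod (n - p) k0); rewrite -en in h.
have hm1 : (n %/ k - 1 <= m)%N.
  rewrite /m; have := divn_eq n k; have := divn_eq (n - p) k.
  have := ltn_pmod n k0; have := ltn_pmod (n - p) k0. nia.
have hm2 : (m <= n %/ k)%N by rewrite /m leq_div2r // leq_subr.
rewrite (@big_cat_nat _ _ _ (n %/ k - 1)%N 0 m _ _ (leq0n _) hm1) /= in h.
suff : - M <= \sum_(n %/ k - 1 <= i < m) phi k (iter (i * k) T (iter p T x)).
  by move=> h3; have := M0; lra.
apply: le_trans (_ : \sum_(n %/ k - 1 <= i < m) (- M) <= _); last first.
  by apply: ler_sum => i _; exact: lowB.
rewrite sumr_const_nat.
have : (m - (n %/ k - 1) <= 1)%N by lia.
case: (m - (n %/ k - 1))%N => [|[|]] // _.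
  by rewrite mulr0n; have := M0; lra.
Qed.


Lemma reindex (g : nat -> R) m :
  \sum_(0 <= i < m * k) g i = \sum_(0 <= p < k) \sum_(0 <= l < m) g (l * k + p)%N.
Proof.
elim: m => [|m IH]; first by rewrite mul0n big_geq // big1 // => p _; rewrite big_geq.
rewrite mulSn addnC (@big_cat_nat _ _ _ (m * k)) //=; last by rewrite leq_addr.
rewrite IH -{1}(add0n (m * k)%N) big_addn addKn -big_split /=.
apply: eq_bigr => p _; rewrite [RHS]big_nat_recr //= addnC.
by []. Qed.

Lemma mainineq n x :
  \sum_(0 <= i < n) phi k (iter i T x) <= k%:R * phi n x + 8 * (k%:R * M).
Proof.
set m := (n %/ k - 1)%N.
have hm : (m * k <= n)%N by rewrite /m mulnBl mul1n; have := leq_trunc_div n k; lia.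
have hm2 : (n - m * k <= 2 * k)%N.
  rewrite /m; have := divn_eq n k; have := ltn_pmod n k0; nia.
rewrite (@big_cat_nat _ _ _ (m * k)) //=.
have e1 : \sum_(m * k <= i < n) phi k (iter i T x) <= M *+ (2 * k).
  apply: le_trans (_ : \sum_(m * k <= i < n) M <= _).
    by apply: ler_sum => i _; exact: upB.
  by rewrite sumr_const_nat; apply: ler_wpMn2l.
have e2 : \sum_(0 <= i < m * k) phi k (iter i T x) <= k%:R * (phi n x + 6 * M).
  rewrite reindex.
  apply: le_trans (_ : \sum_(0 <= p < k) (phi n x + 6 * M) <= _); last first.
    by rewrite sumr_const_nat subn0 -(mulr_natl (phi n x + 6 * M)).

  rewrite !big_nat; apply: ler_sum => p /andP[_ pk].
  have := @Qq p n x pk; rewrite -/m.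
  under eq_bigr do rewrite -iterD.
  lra.
move: e1 e2; rewrite -(mulr_natl M (2 * k)) natrM; nra.
Qed.

End Comb.
Lemma unif_cont (R : realType) (X : pointedMetricType R) (f : X -> R) :
  compact [set: X] -> continuous f ->
  forall eta : R, 0 < eta -> exists2 d : R, 0 < d &
    forall a b : X, mdist a b < d -> `|f a - f b| < eta.
Proof.
move=> cpt cf eta eta0.
have H := (compact_near_coveringP [set: X]).1 cpt R (0^'+)
  (fun d a => forall b, mdist a b < d -> `|f a - f b| < eta) _.
have {H} : \forall d \near 0^'+, [set: X] `<=`
    (fun a => forall b, mdist a b < d -> `|f a - f b| < eta).
  apply: H => x _.
  have e2 : 0 < eta / 2 by rewrite divr_gt0.
  have := cf x; move=> /cvgrPdist_lt /(_ _ e2) /nbhs_ballP[r /= r0 Hr].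
  exists (ball x (r / 2), [set d | 0 < d < r / 2]) => /=.
    split; first by apply: (@nbhsx_ballx R X x (r / 2)); rewrite divr_gt0.
    have r2 : (0:R) < r / 2 by rewrite divr_gt0.
    near=> d; apply/andP; split; near: d; [exact: nbhs_right_gt | exact: nbhs_right_lt].
  case=> a d [/= xa /andP[d0 dr]] b ab.
  rewrite ballEmdist /= in xa.
  have h1 : `|f x - f a| < eta / 2.
    by apply: Hr; rewrite ballEmdist /=; lra.
  have h2 : `|f x - f b| < eta / 2.
    apply: Hr; rewrite ballEmdist /=.
    have := metric_triangle x a b; lra.
  have := ler_distD (f x) (f a) (f b); rewrite distrC in h1; lra.
move=> H; have [d [d0 Hd]] := filter_ex (filterI (nbhs_right_gt (0:R)) H).
by exists d => // a b; apply: Hd.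
Unshelve. all: by end_near. Qed.

Lemma bnd1 (R : realType) (X : pointedMetricType R) (f : X -> R) :
  compact [set: X] -> continuous f -> exists2 M : R, 0 < M & forall x, `|f x| < M.
Proof.
move=> cpt cf.
have /ex_strict_bound_gt0[M M0 HM] : bounded_set (f @` [set: X]).
  apply/compact_bounded/continuous_compact => //.
  exact: continuous_subspaceT.
by exists M => // x; apply: HM; exists x.
Qed.

Lemma bndk (R : realType) (X : pointedMetricType R) (phi : nat -> X -> R) k :
  compact [set: X] -> (forall n, continuous (phi n)) ->
  exists2 M : R, 0 <= M & forall j x, (j <= k)%N -> `|phi j x| <= M.
Proof.
move=> cpt cf; elim: k => [|k [M M0 HM]].
  have [M M0 HM] := bnd1 cpt (cf 0%N).
  exists M; first exact: ltW.
  by move=> j x; rewrite leqn0 => /eqP ->; apply: ltW.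
have [N N0 HN] := bnd1 cpt (cf k.+1).
exists (M + N); first by rewrite addr_ge0 // ltW.
move=> j x; rewrite leq_eqVlt => /orP[/eqP ->|jk].
  by have := HN x; have := M0; lra.
by have := HM j x jk; have := N0; lra.
Qed.
Lemma ballbound (R : realType) (X : pointedMetricType R) (T : X -> X)
   (phi : nat -> X -> R) k (M eta d eps : R) n (x : X) :
  (forall n m x, (0 < n)%N -> (0 < m)%N ->
     phi n x + phi m (iter n T x) <= phi (n + m)%N x) ->
  (forall j x, (j <= k)%N -> `|phi j x| <= M) -> 0 <= M -> (0 < k)%N ->
  (forall a b : X, mdist a b < d -> `|phi k a - phi k b| < k%:R * eta) ->
  eps <= d -> 0 < eps ->
  sup [set birkhoff T (fun x => (phi k x / k%:R)%R) n y | y in bowen_ball T n x eps]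
    <= phi n x + 8 * M + n%:R * eta.
Proof.
move=> Hsup Hb M0 k0 Hd epsd eps0.
have kpos : (0 : R) < k%:R by rewrite ltr0n.
apply: ge_sup.
  exists (birkhoff T (fun x => (phi k x / k%:R)%R) n x), x => //.
  by move=> i _; rewrite mdistxx.
move=> _ [y yB <-]; rewrite /birkhoff.
apply: le_trans (_ : \sum_(i < n) ((phi k (iter i T x) + k%:R * eta) / k%:R) <= _).
  apply: ler_sum => i _; rewrite ler_pM2r ?invr_gt0 //.
  have := Hd _ _ (lt_le_trans (yB i (ltn_ord i)) epsd).
  rewrite ltr_norml; lra.
rewrite -mulr_suml big_split /= sumr_const card_ord -mulr_natl.
have := mainineq Hsup Hb k0 M0 n x; rewrite big_mkord => h.
rewrite ler_pdivrMr //; nra.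
Qed.

Lemma part1 (R : realType) (X : pointedMetricType R) (T : X -> X)
    (phi : nat -> X -> R) (k : nat) (mu : probability borel_space R) :
  compact [set: X] -> supadditive_potential T phi -> (0 < k)%N ->
  (exists C : R, forall eta : R, 0 < eta ->
     exists2 eps0 : R, 0 < eps0 &
       forall (eps : R) (n : nat) (delta : R),
         0 < eps < eps0 -> (0 < n)%N -> 0 < delta < 1 ->
         ((expR (- (n%:R * eta) - C)%R)%:E
            * Pn_fun T mu (fun x => (phi k x / k%:R)%R) n eps delta
          <= Pn_pot T mu phi n eps delta)%E).
Proof.
move=> cpt [cphi Hsup] k0.
have [M M0 Hb] := bndk k cpt cphi.
exists (8 * M) => eta eta0.
have kpos : (0 : R) < k%:R by rewrite ltr0n.
have [d d0 Hd] := unif_cont cpt (cphi k) (mulr_gt0 kpos eta0).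
exists d => // eps n delta /andP[eps0 epsd] n0 _.
apply: le_ereal_inf_tmp => _ [F FS <-].
set c := expR _.
apply: (@le_trans _ _ (c%:E * (\sum_(x <- F)
      expR (sup [set birkhoff T (fun x => (phi k x / k%:R)%R) n y
                 | y in bowen_ball T n x eps]))%:E)%E).
  apply: lee_wpmul2l; first by rewrite lee_fin expR_ge0.
  by apply: ereal_inf_lbound; exists F.
rewrite -EFinM lee_fin mulr_sumr; apply: ler_sum => x _.
have := @ballbound R X T phi k M eta d eps n x Hsup Hb M0 k0 Hd (ltW epsd) eps0.
rewrite /c -expRD ler_expR => h.
lra.
Qed.
Lemma mball_open (R : realType) (X : pointedMetricType R) (a : X) e :
  open [set y | mdist a y < e].
Proof.
rewrite openE => y /= h; apply/nbhs_ballP; exists (e - mdist a y) => /=.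
  by rewrite subr_gt0.
move=> z; rewrite ballEmdist /= => hz.
have := metric_triangle a y z; lra.
Qed.

Lemma iter_cont (R : realType) (X : pointedMetricType R) (T : X -> X) i :
  continuous T -> continuous (iter i T).
Proof.
move=> cT; elim: i => [|i IH] x /=; first exact: cvg_id.
exact: (@continuous_comp _ _ _ (iter i T) T x (IH x) (cT _)).
Qed.

Lemma bowen_open (R : realType) (X : pointedMetricType R) (T : X -> X) n x e :
  continuous T -> open (bowen_ball T n x e).
Proof.
move=> cT; elim: n => [|n IH].
  rewrite (_ : bowen_ball _ _ _ _ = setT); first exact: openT.
  by apply/funext => y; apply/propext; split => // _ i.
rewrite (_ : bowen_ball _ _ _ _ = bowen_ball T n x e `&`
   (iter n T) @^-1` [set y | mdist (iter n T x) y < e]).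
  apply: openI => //; apply: open_comp.
    by move=> y _; apply: iter_cont.
  exact: mball_open.
apply/funext => y; apply/propext; split.
  by move=> h; split => [i iN|]; [apply: h; apply: ltnW | apply: h].
move=> [h1 h2] i; rewrite ltnS leq_eqVlt => /orP[/eqP ->//|]; exact: h1.
Qed.

Lemma span_mono_eps (R : realType) (X : pointedMetricType R) (T : X -> X)
  (mu : probability borel_space R) n (e1 e2 delta : R) F :
  continuous T -> e1 <= e2 -> spanning T mu n e1 delta F -> spanning T mu n e2 delta F.
Proof.
move=> cT e12; rewrite /spanning => h; apply: le_trans h _.
apply: le_measure.
- rewrite inE; apply: sub_gen_smallest; apply: bigcup_open => y _; exact: bowen_open.
- rewrite inE; apply: sub_gen_smallest; apply: bigcup_open => y _; exact: bowen_open.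
- move=> z [y yF Hy]; exists y => // i iN.
  exact: lt_le_trans (Hy i iN) e12.
Qed.

Section ER.
Local Open Scope ereal_scope.
Lemma esup_shift (R : realType) (u v : (\bar R)^nat) (c : R) (N : nat) :
  (forall n, (N <= n)%N -> u n <= v n + c%:E) ->
  limn_esup u <= limn_esup v + c%:E.
Proof.
move=> H; rewrite -leeBlDr //.
rewrite /limn_esup /limf_esup.
apply: le_ereal_inf_tmp => _ [V VF <-].
rewrite leeBlDr //.
have VF' : \oo (V `&` [set n | (N <= n)%N]).
  by apply: filterI => //; exists N.
apply: (@le_trans _ _ (ereal_sup (u @` (V `&` [set n | (N <= n)%N])))).
  by apply: ereal_inf_lbound; exists (V `&` [set n | (N <= n)%N]).
apply: ge_ereal_sup => _ [n [Vn Nn] <-].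
apply: le_trans (H n Nn) _; apply: leeD2r.
by apply: ereal_sup_ubound; exists n.
Qed.

Lemma Pnn_ge0 (R : realType) (S : set \bar R) :
  (forall y, S y -> 0 <= y) -> 0 <= ereal_inf S.
Proof. by move=> h; apply: le_ereal_inf_tmp. Qed.

Lemma rate_mono (R : realType) n (v w : \bar R) :
  0 <= v -> v <= w -> rate n v <= rate n w.
Proof.
move=> v0 vw; rewrite /rate; apply: lee_wpmul2l.
  by rewrite lee_fin invr_ge0.
rewrite lee_lne // in_itv /= leey andbT //; exact: le_trans vw.
Qed.

Lemma rate_key (R : realType) n (a b : \bar R) (c0 : R) :
  (0 < n)%N -> 0 <= a -> (expR c0)%:E * a <= b ->
  rate n a <= rate n b + (- c0 / n%:R)%:E.
Proof.
move=> n0 a0 h.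
have np : (0 < (n%:R)^-1 :> R)%R by rewrite invr_gt0 ltr0n.
move: a0; rewrite le_eqVlt => /orP[/eqP <-|apos].
  rewrite /rate le0_lneNy // mulrNy gtr0_sg // mul1e leNye //.
have hb : rate n ((expR c0)%:E * a) <= rate n b.
  by apply: rate_mono => //; apply: ltW; apply: mule_gt0 => //; rewrite lte_fin expR_gt0.
move: hb; rewrite /rate lneM; last 2 first.
- by rewrite in_itv /= leey andbT lte_fin expR_gt0.
- by rewrite in_itv /= leey andbT apos.
rewrite lne_EFin ?expR_gt0 // expRK muleDr //.
rewrite -EFinM => hb.
rewrite -(@leeD2rE _ (((n%:R)^-1 * c0)%:E)) //.
apply: le_trans; first by rewrite addeC; exact: hb.
have e0 : (- c0 / n%:R + (n%:R)^-1 * c0 = 0)%R by ring.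
by rewrite -addeA -EFinD e0 adde0.
Qed.
Lemma lim_noninc (R : realType) (f : R -> \bar R) (b : itv_bound R) :
  (BRight 0%R < b)%O -> {in Interval (BRight 0%R) b &, nonincreasing_fun f} ->
  lim (f @ 0%R^'+) = ereal_sup (f @` [set` Interval (BRight 0%R) b]).
Proof.
by move=> h1 h2; apply: cvg_lim => //; exact: nonincreasing_at_right_cvge.
Qed.

Lemma esup_mono (R : realType) (u v : (\bar R)^nat) :
  (forall n, u n <= v n) -> limn_esup u <= limn_esup v.
Proof.
move=> h; have := @esup_shift R u v 0%R 0%N; rewrite adde0; apply => n _.
by rewrite adde0.
Qed.

Lemma Pf_ge0 (R : realType) (X : pointedMetricType R) (T : X -> X) mu psi n e d :
  0 <= Pn_fun T mu psi n e d.
Proof.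
apply: Pnn_ge0 => _ [F _ <-]; rewrite lee_fin; apply: sumr_ge0 => x _; exact: expR_ge0.
Qed.

Lemma Pp_ge0 (R : realType) (X : pointedMetricType R) (T : X -> X) mu phi n e d :
  0 <= Pn_pot T mu phi n e d.
Proof.
apply: Pnn_ge0 => _ [F _ <-]; rewrite lee_fin; apply: sumr_ge0 => x _; exact: expR_ge0.
Qed.

Lemma span_mono_delta (R : realType) (X : pointedMetricType R) (T : X -> X)
  (mu : probability borel_space R) n (e d1 d2 : R) F :
  (d1 <= d2)%R -> spanning T mu n e d1 F -> spanning T mu n e d2 F.
Proof.
by move=> h; rewrite /spanning; apply: le_trans; rewrite lee_fin; lra.
Qed.

Lemma Pf_mono_delta (R : realType) (X : pointedMetricType R) (T : X -> X) mu psi n e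
  (d1 d2 : R) : (d1 <= d2)%R -> Pn_fun T mu psi n e d2 <= Pn_fun T mu psi n e d1.
Proof.
move=> h; apply: le_ereal_inf => _ [F FS <-]; exists F => //.
exact: span_mono_delta FS.
Qed.

Lemma Pp_mono_delta (R : realType) (X : pointedMetricType R) (T : X -> X) mu phi n e
  (d1 d2 : R) : (d1 <= d2)%R -> Pn_pot T mu phi n e d2 <= Pn_pot T mu phi n e d1.
Proof.
move=> h; apply: le_ereal_inf => _ [F FS <-]; exists F => //.
exact: span_mono_delta FS.
Qed.

Lemma Pp_mono_eps (R : realType) (X : pointedMetricType R) (T : X -> X) mu phi n
  (e1 e2 d : R) : continuous T ->
  (e1 <= e2)%R -> Pn_pot T mu phi n e2 d <= Pn_pot T mu phi n e1 d.
Proof.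
move=> cT h; apply: le_ereal_inf => _ [F FS <-]; exists F => //.
exact: span_mono_eps FS.
Qed.

Lemma liminf_mono (R : realType) (f g : R -> \bar R) :
  (forall e, f e <= g e) -> liminf_right0 f <= liminf_right0 g.
Proof.
move=> h; apply: ge_ereal_sup => _ [r r0 <-].
apply: (@le_trans _ _ (ereal_inf [set g e | e in [set e | (0 < e < r)%R]])); last first.
  by apply: ereal_sup_ubound; exists r.
apply: le_ereal_inf_tmp => _ [e He <-].
apply: le_trans (h e); apply: ereal_inf_lbound; exists e => //.
Qed.

Lemma part2 (R : realType) (X : pointedMetricType R) (T : X -> X)
    (phi : nat -> X -> R) (k : nat) (mu : probability borel_space R) :
  continuous T ->
  (exists C : R, forall eta : R, (0 < eta)%R ->
     exists2 eps0 : R, (0 < eps0)%R &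
       forall (eps : R) (n : nat) (delta : R),
         (0 < eps < eps0)%R -> (0 < n)%N -> (0 < delta < 1)%R ->
         ((expR (- (n%:R * eta) - C)%R)%:E
            * Pn_fun T mu (fun x => (phi k x / k%:R)%R) n eps delta
          <= Pn_pot T mu phi n eps delta)) ->
  pressure_fun T mu (fun x => (phi k x / k%:R)%R) <= pressure_pot T mu phi.
Proof.
move=> cT [C HC].
set psi := (fun x => _).
pose Gd delta eps := limn_esup (fun n => rate n (Pn_pot T mu phi n eps delta)).
pose Fd delta eps := limn_esup (fun n => rate n (Pn_fun T mu psi n eps delta)).
pose I01 : interval R := Interval (BRight 0%R) (BLeft 1%R).
pose Ipos : interval R := Interval (BRight 0%R) (BInfty R false).
have Gd_noninc delta : {in Ipos &, nonincreasing_fun (Gd delta)}.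
  move=> e1 e2 _ _ e12; apply: esup_mono => n; apply: rate_mono; first exact: Pp_ge0.
  exact: Pp_mono_eps.
have Hd delta : lim (Gd delta @ 0%R^'+) = ereal_sup (Gd delta @` [set` Ipos]).
  exact: (@lim_noninc R (Gd delta) (BInfty R false) isT (Gd_noninc delta)).
have Gd_mono_delta e d1 d2 : (d1 <= d2)%R -> Gd d2 e <= Gd d1 e.
  move=> h; apply: esup_mono => n; apply: rate_mono; first exact: Pp_ge0.
  exact: Pp_mono_delta.
have Fd_mono_delta e d1 d2 : (d1 <= d2)%R -> Fd d2 e <= Fd d1 e.
  move=> h; apply: esup_mono => n; apply: rate_mono; first exact: Pf_ge0.
  exact: Pf_mono_delta.
have pp : pressure_pot T mu phi =
    ereal_sup ((fun delta => lim (Gd delta @ 0%R^'+)) @` [set` I01]).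
  have b01 : (BRight (0:R)%R < BLeft (1:R)%R)%O by rewrite bnd_simp.
  apply: (@lim_noninc R (fun delta => lim (Gd delta @ 0%R^'+)) (BLeft 1%R) b01).
  move=> d1 d2 _ _ d12; rewrite /= !Hd; apply: ge_ereal_sup => _ [e He <-].
  apply: le_trans (Gd_mono_delta e _ _ d12) _; apply: ereal_sup_ubound.
  by exists e.
have pf : pressure_fun T mu psi =
    ereal_sup ((fun delta => liminf_right0 (Fd delta)) @` [set` I01]).
  have b01 : (BRight (0:R)%R < BLeft (1:R)%R)%O by rewrite bnd_simp.
  apply: (@lim_noninc R (fun delta => liminf_right0 (Fd delta)) (BLeft 1%R) b01).
  move=> d1 d2 _ _ d12; apply: liminf_mono => e.
  exact: Fd_mono_delta.
rewrite pp pf; apply: ge_ereal_sup => _ [delta Hdel <-].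
apply: (@le_trans _ _ (lim (Gd delta @ 0%R^'+))); last first.
  by apply: ereal_sup_ubound; exists delta.
have Hdel' : (0 < delta < 1)%R by move: Hdel; rewrite /= in_itv.
rewrite Hd; apply: ge_ereal_sup => _ [r r0 <-].
apply/lee_addgt0Pr => eta eta0.
have eta20 : (0 < eta / 2)%R by rewrite divr_gt0.
have [eps0 eps00 H0] := HC (eta / 2)%R eta20.
pose e := (Num.min r eps0 / 2)%R.
have r0' : (0 < r)%R by [].
have hm1 : (Num.min r eps0 <= r)%R by rewrite ge_min lexx.
have hm2 : (Num.min r eps0 <= eps0)%R by rewrite ge_min lexx orbT.
have hm0 : (0 < Num.min r eps0)%R by rewrite lt_min r0' eps00.
have e0 : (0 < e)%R by rewrite /e divr_gt0.
have er : (e < r)%R by rewrite /e; lra.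
have ee0 : (e < eps0)%R by rewrite /e; lra.
apply: (@le_trans _ _ (Fd delta e)).
  by apply: ereal_inf_lbound; exists e => //=; rewrite e0 er.
apply: (@le_trans _ _ (Gd delta e + eta%:E)); last first.
  rewrite leeD2r //; apply: ereal_sup_ubound; exists e => //=.
  by rewrite in_itv /= e0.
pose N := (Num.Def.trunc (`|C| * 2 / eta)).+1.
apply: (@esup_shift _ _ _ _ N) => n Nn.
have n0 : (0 < n)%N by apply: leq_trans Nn.
have := rate_key n0 (Pf_ge0 _ _ _ _ _ _) (H0 e n delta _ n0 Hdel').
move=> /(_ _) h; apply: le_trans; first by apply: h; rewrite e0 ee0.
rewrite leeD2l // lee_fin.
have npos : (0 < n%:R :> R)%R by rewrite ltr0n.
have hN : (`|C| * 2 / eta < n%:R)%R.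
  apply: lt_le_trans (truncnS_gt _) _; rewrite ler_nat; exact: Nn.
rewrite ltr_pdivrMr // in hN.
have hC := ler_norm C.
rewrite ler_pdivrMr //; nra.
Qed.
End ER.

Theorem lemma4p2 (R : realType) (X : pointedMetricType R) (T : X -> X)
    (phi : nat -> X -> R) (k : nat) (mu : probability borel_space R) :
  compact [set: X] ->
  continuous T ->
  supadditive_potential T phi ->
  (0 < k)%N ->
  T_invariant T mu ->
  ergodic T mu ->
  (exists C : R, forall eta : R, 0 < eta ->
     exists2 eps0 : R, 0 < eps0 &
       forall (eps : R) (n : nat) (delta : R),
         0 < eps < eps0 -> (0 < n)%N -> 0 < delta < 1 ->
         ((expR (- (n%:R * eta) - C)%R)%:E
            * Pn_fun T mu (fun x => (phi k x / k%:R)%R) n eps delta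
          <= Pn_pot T mu phi n eps delta)%E)
  /\ (pressure_fun T mu (fun x => (phi k x / k%:R)%R) <= pressure_pot T mu phi)%E.
Proof.
move=> cpt cT sp k0 _ _.
have h := part1 mu cpt sp k0.
split => //.
exact: part2 cT h.
Qed.
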